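(* Let $\alpha\in(0,\pi/2]$ and define $$r(d)=\Big(16\sin^3\alpha\,d^2+30\big((3\cos\alpha-4)\sin\alpha+\alpha(4\cos\alpha-3)\big)\Big)^2,\qquad d\in\mathbb{R}.$$ Then $r$ has precisely one positive zero, which is a double zero, namely $$d_1=\frac{\sqrt{30}}{4}\sqrt{\frac{\alpha(3-4\cos\alpha)+(4-3\cos\alpha)\sin\alpha}{\sin^3\alpha}},$$ and it satisfies $d_1>\tfrac{5}{2}$.
   Context: The function $r$ arises as the resultant with respect to $u_1$ of the two polynomial equations in the system stated in this paper for the non-symmetric case of interpolating circular arc data by degree-7 Pythagorean-hodograph curves; only the explicit formula above is needed. *)

(* Defs.v *)
From Stdlib Require Import Reals.
From Coquelicot Require Import Coquelicot.
Open Scope R_scope.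

Definition r_fun (alpha d : R) : R :=
  (16 * sin alpha ^ 3 * d ^ 2
   + 30 * ((3 * cos alpha - 4) * sin alpha + alpha * (4 * cos alpha - 3))) ^ 2.

Definition d1_val (alpha : R) : R :=
  sqrt 30 / 4 *
  sqrt ((alpha * (3 - 4 * cos alpha) + (4 - 3 * cos alpha) * sin alpha)
        / sin alpha ^ 3).

(* Main.v *)
Require Import Defs.
From Stdlib Require Import Reals Lra Psatz FunctionalExtensionality.
From Coquelicot Require Import Coquelicot.
Open Scope R_scope.

Lemma polyQ (y : R) : 0 <= y <= 4 ->
  0 < 27/8 - 49/48 * y + 7/54 * y^2 - 13/1440 * y^3 + 1/2880 * y^4 - 1/172800 * y^5.
Proof. intros H. nra. Qed.

Lemma key0 (x s c C SL SU : R) : 0 < x <= 2 -> 0 < s ->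
  SL <= s <= SU -> c <= C -> 0 <= SL -> 4 - 3 * C >= 0 ->
  10 * SU^3 < 3 * (x * (3 - 4 * C) + (4 - 3 * C) * SL) ->
  10 * s^3 < 3 * (x * (3 - 4 * c) + (4 - 3 * c) * s).
Proof.
  intros Hx Hs [Sl Su] Hc HSL HC1 P.
  assert (0 <= (4*x+3*s)*(C-c)) by (apply Rmult_le_pos; lra).
  assert (0 <= (4 - 3*C)*(s-SL)) by (apply Rmult_le_pos; lra).
  assert (A3 : s^3 <= SU^3) by (apply pow_incr; lra).
  nra.
Qed.

Lemma key (x s c : R) : 0 < x <= 2 -> 0 < s ->
  x - x^3/6 <= s <= x - x^3/6 + x^5/120 -> c <= 1 - x^2/2 + x^4/24 ->
  10 * s^3 < 3 * (x * (3 - 4 * c) + (4 - 3 * c) * s).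
Proof.
  intros Hx Hs HS Hc.
  assert (Hx2 : 0 <= x^2 <= 4) by nra.
  apply (key0 x s c (1 - x^2/2 + x^4/24) (x - x^3/6) (x - x^3/6 + x^5/120)); try lra.
  - replace (x - x^3/6) with (x * (1 - x^2/6)) by field.
    apply Rmult_le_pos; lra.
  - assert (x^4 = x^2*x^2) by ring. nra.
  - assert (E : 3 * (x * (3 - 4 * (1 - x^2/2 + x^4/24)) + (4 - 3 * (1 - x^2/2 + x^4/24)) * (x - x^3/6)) - 10 * (x - x^3/6 + x^5/120)^3 =
      x^5 * (27/8 - 49/48 * (x^2) + 7/54 * (x^2)^2 - 13/1440 * (x^2)^3
             + 1/2880 * (x^2)^4 - 1/172800 * (x^2)^5)) by field.
    assert (Q := polyQ (x^2) Hx2).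
    assert (0 < x^5) by (apply pow_lt; lra).
    assert (0 < x^5 * (27/8 - 49/48 * (x^2) + 7/54 * (x^2)^2 - 13/1440 * (x^2)^3
             + 1/2880 * (x^2)^4 - 1/172800 * (x^2)^5)) by (apply Rmult_lt_0_compat; lra).
    lra.
Qed.

Theorem lemma1 (alpha : R) (Halpha : 0 < alpha <= PI / 2) :
  (* d1 is positive and is the unique positive zero of r *)
  0 < d1_val alpha /\
  (forall d : R, 0 < d -> (r_fun alpha d = 0 <-> d = d1_val alpha)) /\
  (* it is a double zero: r' vanishes there, r'' does not *)
  Derive (r_fun alpha) (d1_val alpha) = 0 /\
  Derive_n (r_fun alpha) 2 (d1_val alpha) <> 0 /\
  (* and d1 > 5/2 *)
  5 / 2 < d1_val alpha.
Proof.
  assert (HPI := PI_4). assert (HPI2 := PI2_1).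
  assert (Hs : 0 < sin alpha) by (apply sin_gt_0; lra).
  assert (HS := sin_bound alpha 0 ltac:(lra) ltac:(lra)).
  assert (HC := cos_bound alpha 0 ltac:(lra) ltac:(lra)).
  simpl in HS, HC.
  unfold sin_approx, cos_approx in HS, HC. simpl in HS, HC.
  unfold sin_term, cos_term in HS, HC. simpl in HS, HC.
  set (s := sin alpha) in *. set (c := cos alpha) in *.
  set (K := alpha * (3 - 4 * c) + (4 - 3 * c) * s).
  assert (HK : 10 * s^3 < 3 * K).
  { apply key; try lra. }
  assert (Hs3 : 0 < s^3) by (apply pow_lt; lra).
  assert (HKp : 0 < K) by lra.
  assert (HD : 0 < K / s^3) by (apply Rdiv_lt_0_compat; lra).
  assert (Hr : forall d, r_fun alpha d = (16 * s^3 * d^2 - 30 * K)^2).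
  { intros d. unfold r_fun, K. fold s c. ring. }
  assert (Hd1 : d1_val alpha = sqrt 30 / 4 * sqrt (K / s^3)) by reflexivity.
  assert (H30 : 0 < sqrt 30) by (apply sqrt_lt_R0; lra).
  assert (HsD : 0 < sqrt (K / s^3)) by (apply sqrt_lt_R0; lra).
  assert (Hpos : 0 < d1_val alpha) by (rewrite Hd1; apply Rmult_lt_0_compat; lra).
  assert (Hsq : 16 * s^3 * (d1_val alpha)^2 = 30 * K).
  { rewrite Hd1. replace ((sqrt 30 / 4 * sqrt (K / s ^ 3))^2) with
      ((sqrt 30 * sqrt 30) / 16 * (sqrt (K / s ^ 3) * sqrt (K / s ^ 3))) by field.
    rewrite !sqrt_sqrt; try lra. field. lra. }
  set (d1 := d1_val alpha) in *.
  assert (Hder : forall d, is_derive (r_fun alpha) d (2 * (16 * s^3 * d^2 - 30 * K) * (32 * s^3 * d))).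
  { intros d. apply is_derive_ext with (f := fun d => (16 * s^3 * d^2 - 30 * K)^2).
    { intros t. rewrite Hr. reflexivity. }
    auto_derive; auto. ring. }
  assert (HD1 : Derive (r_fun alpha) = fun d => 2 * (16 * s^3 * d^2 - 30 * K) * (32 * s^3 * d)).
  { apply functional_extensionality. intros d. apply is_derive_unique. apply Hder. }
  assert (Hder2 : is_derive (fun d => 2 * (16 * s^3 * d^2 - 30 * K) * (32 * s^3 * d)) d1
     (2 * (32 * s^3 * d1) * (32 * s^3 * d1) + 2 * (16 * s^3 * d1^2 - 30 * K) * (32 * s^3))).
  { auto_derive; auto. ring. }
  split; [exact Hpos|].
  split.
  { intros d Hd. rewrite Hr. split.
    - intros H0. assert (H0b : 16 * s ^ 3 * d ^ 2 - 30 * K = 0) by (destruct (Req_dec (16 * s ^ 3 * d ^ 2 - 30 * K) 0) as [E|E]; [exact E| apply (pow_nonzero _ 2) in E; contradiction]). clear H0. rename H0b into H0.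
      assert (d^2 = d1^2) by nra.
      assert ((d - d1) * (d + d1) = 0) by nra.
      apply Rmult_integral in H1. destruct H1; lra.
    - intros ->. replace (16 * s ^ 3 * d1 ^ 2 - 30 * K) with 0 by lra. ring. }
  split.
  { rewrite HD1. replace (16 * s ^ 3 * d1 ^ 2 - 30 * K) with 0 by lra. ring. }
  split.
  { simpl. rewrite (Derive_ext _ (fun d => 2 * (16 * s^3 * d^2 - 30 * K) * (32 * s^3 * d))); [| intros t; exact (f_equal (fun f => f t) HD1)]. assert (Hval : Derive (fun d : R => 2 * (16 * s^3 * d^2 - 30 * K) * (32 * s^3 * d)) d1 = 2 * (32 * s^3 * d1) * (32 * s^3 * d1) + 2 * (16 * s^3 * d1^2 - 30 * K) * (32 * s^3)) by (apply is_derive_unique; exact Hder2). rewrite Hval.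
    replace (16 * s ^ 3 * d1 ^ 2 - 30 * K) with 0 by lra.
    assert (0 < 32 * s^3 * d1) by (apply Rmult_lt_0_compat; lra). nra. }
  assert (25/4 * s^3 < d1^2 * s^3) by nra.
  assert (25/4 < d1^2) by nra.
  nra.
Qed.
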